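(* Let $(V,\|\cdot\|)$ be a normed plane, let $x,y\in V$ be distinct, and suppose there is a line $l$ with $l\subseteq\mathrm{bis}(x,y)$. Then for any nondegenerate segment $[zw]\subseteq l$ whose midpoint is $\frac{x+y}{2}$, we have $\langle xy\rangle\subseteq\mathrm{bis}(z,w)$.
   Context: A normed (Minkowski) plane $(V,\|\cdot\|)$ is a two-dimensional real vector space with a norm. For $x,y\in V$, $[xy]$ denotes the closed segment and $\langle xy\rangle$ the line through $x,y$. For distinct $x,y$, $\mathrm{bis}(x,y)=\{z\in V:\|z-x\|=\|z-y\|\}$. *)

(* Defs.v *)
(* classical reals.  A normed plane is modelled as R^2 = R*R
   equipped with an arbitrary norm (every 2-dim real normed space is
   linearly isometric to such a space). *)
From Stdlib Require Import Reals.
Open Scope R_scope.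

Definition pt := (R * R)%type.

Definition vadd (p q : pt) : pt := (fst p + fst q, snd p + snd q).
Definition vsub (p q : pt) : pt := (fst p - fst q, snd p - snd q).
Definition vscale (t : R) (p : pt) : pt := (t * fst p, t * snd p).
Definition vzero : pt := (0, 0).

Definition is_norm (N : pt -> R) : Prop :=
  (forall p, 0 <= N p) /\
  (forall p, N p = 0 -> p = vzero) /\
  (forall t p, N (vscale t p) = Rabs t * N p) /\
  (forall p q, N (vadd p q) <= N p + N q).

Definition bis (N : pt -> R) (x y : pt) : pt -> Prop :=
  fun z => N (vsub z x) = N (vsub z y).

Definition line_through (a b : pt) : pt -> Prop :=
  fun p => exists t : R, p = vadd a (vscale t (vsub b a)).

Definition is_line (l : pt -> Prop) : Prop :=
  exists p d : pt, d <> vzero /\ forall q, l q <-> exists t : R, q = vadd p (vscale t d).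

Definition segment (a b : pt) : pt -> Prop :=
  fun p => exists t : R, 0 <= t <= 1 /\ p = vadd a (vscale t (vsub b a)).

Definition midpoint (a b : pt) : pt := vscale (/2) (vadd a b).

Definition subset (A B : pt -> Prop) : Prop := forall p, A p -> B p.

(* Main.v *)
Require Import Defs.
From Stdlib Require Import Reals Lra.
Open Scope R_scope.

Lemma pair_eq (a b c d : R) : a = c -> b = d -> (a, b) = (c, d).
Proof. intros; subst; reflexivity. Qed.

Theorem lemma2p2 (N : pt -> R) (HN : is_norm N) (x y : pt) (Hxy : x <> y)
  (l : pt -> Prop) (Hl : is_line l) (Hlb : subset l (bis N x y))
  (z w : pt) (Hzw : z <> w) (Hseg : subset (segment z w) l)
  (Hmid : midpoint z w = midpoint x y) :
  subset (line_through x y) (bis N z w).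
Proof.
  destruct HN as [_ [_ [Hsc _]]].
  destruct Hl as [p [d [Hd Hl]]].
  assert (Hz : l z).
  { apply Hseg. exists 0. split; [lra|]. destruct z, w; unfold vadd, vscale, vsub; simpl.
    apply pair_eq; ring. }
  assert (Hw : l w).
  { apply Hseg. exists 1. split; [lra|]. destruct z, w; unfold vadd, vscale, vsub; simpl.
    apply pair_eq; ring. }
  apply Hl in Hz as [a Ha]. apply Hl in Hw as [b Hb].
  intros q [s Hq]. unfold bis.
  destruct x as [x1 x2], y as [y1 y2], z as [z1 z2], w as [w1 w2], p as [p1 p2], d as [d1 d2], q as [q1 q2].
  unfold midpoint, vadd, vscale, vsub in Hmid, Ha, Hb, Hq |- *; simpl in Hmid, Ha, Hb, Hq |- *.
  injection Hmid as Hm1 Hm2. injection Ha as Ha1 Ha2. injection Hb as Hb1 Hb2.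
  injection Hq as Hq1 Hq2.
  destruct (Req_dec (1 - 2*s) 0) as [H0|H0].
  - replace (q1 - z1, q2 - z2) with (vscale (-1) (q1 - w1, q2 - w2)).
    + rewrite Hsc. replace (Rabs (-1)) with 1. ring.
      rewrite Rabs_left; lra.
    + unfold vscale; simpl. apply pair_eq; nra.
  - assert (Ey1 : y1 = z1 + w1 - x1) by lra.
    assert (Ey2 : y2 = z2 + w2 - x2) by lra.
    set (t := / (1 - 2*s)).
    set (c := (a+b)/2 + t*(a-b)/2).
    assert (HP : l (p1 + c*d1, p2 + c*d2)).
    { apply Hl. exists c. reflexivity. }
    apply Hlb in HP. unfold bis, vsub in HP; simpl in HP.
    replace (q1 - z1, q2 - z2) with (vscale (-(1-2*s)) (p1 + c * d1 - x1, p2 + c * d2 - x2)).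
    replace (q1 - w1, q2 - w2) with (vscale (1-2*s) (p1 + c * d1 - y1, p2 + c * d2 - y2)).
    + rewrite !Hsc, HP, Rabs_Ropp. reflexivity.
    + unfold vscale, c, t; simpl. clear HP Hm1 Hm2. subst. apply pair_eq; field; auto.
    + unfold vscale, c, t; simpl. clear HP Hm1 Hm2. subst. apply pair_eq; field; auto.
Qed.
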